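(* Fix any environment trace $e(\cdot)$ with time proportions $(\pi^e)_{e\in\mathcal E}$ and any arrival trace $N(\cdot)$ with traffic load $\rho=\lim_{t\to\infty}N(t)/t$. If $\rho\notin\mathcal R(\mathcal S^e,\pi^e,e\in\mathcal E)$, then under any admissible schedule $S(\cdot)$ the workload satisfies $$\limsup_{t\to\infty}\frac{X_q(t)}{t}>0\quad\text{for at least one queue } q\in\mathcal Q .$$
   Context: Fix integers $Q\ge1$ and $E\ge1$; queues are indexed by $q\in\mathcal Q=\{1,\dots,Q\}$ and environment states by $e\in\mathcal E=\{1,\dots,E\}$. For each $e\in\mathcal E$, $\mathcal S^e\subset\mathbb R^Q$ is a finite nonempty set of service vectors. Components may be negative: $S_q>0$ drains queue $q$ at rate $S_q$, while $S_q<0$ feeds queue $q$ at rate $-S_q$. Each $\mathcal S^e$ is complete: if $S\in\mathcal S^e$ and $S_q>0$, then the vector obtained from $S$ by replacing $S_q$ with $0$ also lies in $\mathcal S^e$. An environment trace is a measurable map $e:[0,\infty)\to\mathcal E$ such that $\pi^e=\lim_{t\to\infty}\frac1t\int_0^t\mathbf 1\{e(z)=e\}\,dz$ exists for each $e$, with $\pi^e>0$ and $\sum_e\pi^e=1$. An arrival trace is the cumulative workload arrival $N(t)=\int_0^tA(z)\,dz\in\mathbb R^Q_{\ge0}$. The rate $A$ may contain Dirac $\delta$-jumps, so $N$ is componentwise nondecreasing with left limits. Its traffic load $\rho=\lim_{t\to\infty}N(t)/t\in\mathbb R^Q_{\ge0}$ is assumed to exist. No other assumption is made on the trace, which may be adversarial.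 An admissible schedule is a measurable map $S:[0,\infty)\to\mathbb R^Q$ with $S(t)\in\mathcal S^{e(t)}$ for all $t$. The resulting workload is $X(t)=X(0)+N(t)-\int_0^tS(z)\,dz$, where $X(0)\in\mathbb R^Q_{\ge0}$, and it satisfies $X(t)\in\mathbb R^Q_{\ge0}$ for all $t$. The stability region is $$\mathcal R(\mathcal S^e,\pi^e,e\in\mathcal E)=\Big\{\rho\in\mathbb R^Q_{\ge0}:\rho\le\sum_{e\in\mathcal E}\pi^e\sum_{S\in\mathcal S^e}\phi^e_S S\ \text{for some } \phi^e_S\ge0 \text{ with } \sum_{S\in\mathcal S^e}\phi^e_S=1,\ e\in\mathcal E\Big\},$$ where the inequality is componentwise. *)

(* Defs.v *)
From Stdlib Require Import Reals List.
Open Scope R_scope.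

Fixpoint rsum (n : nat) (f : nat -> R) : R :=
  match n with
  | O => 0
  | S k => rsum k f + f k
  end.

Definition omeas_le (A : R -> Prop) (r : R) : Prop :=
  forall eps, 0 < eps ->
    exists (a b : nat -> R) (l : R),
      (forall n, a n <= b n) /\
      (forall x, A x -> exists n, a n <= x <= b n) /\
      infinite_sum (fun n => b n - a n) l /\
      l <= r + eps.

Definition has_measure (A : R -> Prop) (m : R) : Prop :=
  omeas_le A m /\ (forall r, omeas_le A r -> m <= r).

Definition lmeasurable (A : R -> Prop) : Prop :=
  forall B r, omeas_le B r ->
    exists r1 r2, omeas_le (fun x => B x /\ A x) r1 /\
                  omeas_le (fun x => B x /\ ~ A x) r2 /\ r1 + r2 <= r.

(* Lebesgue integral over [a,b] of a function taking finitely many values on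
   [a,b]: sum over the distinct values v of v * lambda({z in [a,b] | f z = v}) *)
Definition integral_fin (f : R -> R) (a b I : R) : Prop :=
  exists (vs ms : list R),
    NoDup vs /\ length ms = length vs /\
    (forall z, a <= z <= b -> In (f z) vs) /\
    (forall i, (i < length vs)%nat ->
       has_measure (fun z => a <= z <= b /\ f z = nth i vs 0) (nth i ms 0)) /\
    I = fold_right Rplus 0 (map (fun p => fst p * snd p) (combine vs ms)).

Definition lim_infty (f : R -> R) (l : R) : Prop :=
  forall eps, 0 < eps -> exists T, forall t, T <= t -> Rabs (f t - l) < eps.

Definition limsup_pos (f : R -> R) : Prop :=
  exists c, 0 < c /\ forall T, exists t, T <= t /\ c < f t.

(* vectors in R^Q are functions nat -> R, only coordinates q < Q matter *)
Definition vin (Q : nat) (v : nat -> R) (L : list (nat -> R)) : Prop :=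
  exists w, In w L /\ forall q, (q < Q)%nat -> v q = w q.

Definition in_region (Q E : nat) (Sset : nat -> list (nat -> R))
    (pi : nat -> R) (rho : nat -> R) : Prop :=
  (forall q, (q < Q)%nat -> 0 <= rho q) /\
  exists phi : nat -> nat -> R,
    (forall e i, (e < E)%nat -> (i < length (Sset e))%nat -> 0 <= phi e i) /\
    (forall e, (e < E)%nat -> rsum (length (Sset e)) (phi e) = 1) /\
    (forall q, (q < Q)%nat ->
       rho q <= rsum E (fun e => pi e *
                 rsum (length (Sset e))
                   (fun i => phi e i * nth i (Sset e) (fun _ => 0) q))).

(* Main.v *)
Require Import Defs.
From Stdlib Require Import Reals List Lra Lia Arith ZArith Classical ClassicalEpsilon Rtopology.
Open Scope R_scope.

Lemma sum_nonneg : forall f n, (forall k, 0 <= f k) -> 0 <= sum_f_R0 f n.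
Proof. intros f n H; induction n; simpl; [apply H| specialize (H (S n)); lra]. Qed.

Lemma infsum_nonneg : forall f l, (forall n, 0 <= f n) -> infinite_sum f l -> 0 <= l.
Proof.
  intros f l Hf Hs. destruct (Rle_lt_dec 0 l) as [|Hl]; auto.
  destruct (Hs (-l)) as [N HN]; [lra|].
  specialize (HN N (le_n N)). unfold Rdist in HN.
  pose proof (sum_nonneg f N Hf).
  rewrite Rabs_pos_eq in HN; lra.
Qed.

Lemma omeas_nonneg : forall A r, omeas_le A r -> 0 <= r.
Proof.
  intros A r H. destruct (Rle_lt_dec 0 r) as [|Hr]; auto.
  destruct (H (-r/2)) as (a & b & l & Hab & _ & Hs & Hl); [lra|].
  assert (0 <= l).
  { apply (infsum_nonneg (fun n => b n - a n)); auto. intros n; specialize (Hab n); lra. }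
  lra.
Qed.

Lemma omeas_mono : forall A B r, (forall x, A x -> B x) -> omeas_le B r -> omeas_le A r.
Proof.
  intros A B r HAB H eps He. destruct (H eps He) as (a & b & l & H1 & H2 & H3 & H4).
  exists a, b, l; repeat split; auto.
Qed.

Definition ilv (f g : nat -> R) (n : nat) : R :=
  if Nat.even n then f (Nat.div2 n) else g (Nat.div2 n).

Lemma ilv_even : forall f g k, ilv f g (2 * k) = f k.
Proof. intros; unfold ilv; rewrite Nat.even_even, Nat.div2_double; auto. Qed.

Lemma ilv_odd : forall f g k, ilv f g (S (2 * k)) = g k.
Proof.
  intros; unfold ilv. replace (S (2*k)) with (2*k+1)%nat by lia.
  rewrite Nat.even_odd. replace (2*k+1)%nat with (S (2*k)) by lia.
  rewrite Nat.div2_succ_double; auto.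
Qed.

Lemma ilv_sum : forall f g n,
  sum_f_R0 (ilv f g) (S (2 * n)) = sum_f_R0 f n + sum_f_R0 g n.
Proof.
  intros f g n; induction n.
  - simpl sum_f_R0. unfold ilv; simpl; lra.
  - replace (S (2 * S n)) with (S (S (S (2*n)))) by lia.
    rewrite tech5, tech5, IHn.
    replace (S (S (2*n))) with (2 * S n)%nat by lia.
    rewrite ilv_even, ilv_odd. simpl; lra.
Qed.

Lemma mono_ge : forall u, (forall n, u n <= u (S n)) -> forall k m, (k <= m)%nat -> u k <= u m.
Proof.
  intros u Hu k m Hkm; induction Hkm; [lra|]. specialize (Hu m); lra.
Qed.

Lemma mono_sub_cv : forall u L, (forall n, u n <= u (S n)) ->
  Un_cv (fun n => u (S (2 * n))) L -> Un_cv u L.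
Proof.
  intros u L Hu Hc.
  assert (Hle : forall k, u k <= L).
  { intros k. destruct (Rle_lt_dec (u k) L) as [|Hk]; auto.
    destruct (Hc (u k - L)) as [N HN]; [lra|].
    specialize (HN (max N k) (Nat.le_max_l _ _)). unfold Rdist in HN.
    assert (u k <= u (S (2 * max N k))) by (apply mono_ge; auto; lia).
    rewrite Rabs_pos_eq in HN; lra. }
  intros eps He. destruct (Hc eps He) as [N HN]. exists (S (2 * N)).
  intros n Hn. specialize (HN N (le_n N)). unfold Rdist in *.
  assert (u (S (2*N)) <= u n) by (apply mono_ge; auto).
  pose proof (Hle n). pose proof (Hle (S (2*N))).
  rewrite Rabs_left1 in HN by lra. rewrite Rabs_left1 by lra. lra.
Qed.

Lemma infsum_ilv : forall f g l1 l2, (forall n, 0 <= f n) -> (forall n, 0 <= g n) ->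
  infinite_sum f l1 -> infinite_sum g l2 -> infinite_sum (ilv f g) (l1 + l2).
Proof.
  intros f g l1 l2 Hf Hg H1 H2.
  change (Un_cv (sum_f_R0 (ilv f g)) (l1 + l2)).
  apply mono_sub_cv.
  - intros n. rewrite tech5. unfold ilv. destruct (Nat.even (S n)); [specialize (Hf (Nat.div2 (S n)))|specialize (Hg (Nat.div2 (S n)))]; lra.
  - eapply Un_cv_ext. { intros n. symmetry. apply ilv_sum. }
    apply CV_plus; auto.
Qed.

Lemma omeas_union : forall A B r1 r2, omeas_le A r1 -> omeas_le B r2 ->
  omeas_le (fun x => A x \/ B x) (r1 + r2).
Proof.
  intros A B r1 r2 HA HB eps He.
  destruct (HA (eps/2)) as (a1 & b1 & l1 & Ha1 & Hc1 & Hs1 & Hl1); [lra|].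
  destruct (HB (eps/2)) as (a2 & b2 & l2 & Ha2 & Hc2 & Hs2 & Hl2); [lra|].
  exists (ilv a1 a2), (ilv b1 b2), (l1 + l2). repeat split.
  - intros n; unfold ilv; destruct (Nat.even n); auto.
  - intros x [Hx|Hx].
    + destruct (Hc1 x Hx) as [n Hn]. exists (2*n)%nat. rewrite !ilv_even; auto.
    + destruct (Hc2 x Hx) as [n Hn]. exists (S (2*n)). rewrite !ilv_odd; auto.
  - assert (Heq : forall n, ilv b1 b2 n - ilv a1 a2 n = ilv (fun n => b1 n - a1 n) (fun n => b2 n - a2 n) n).
    { intros n; unfold ilv; destruct (Nat.even n); auto. }
    assert (Hp1 : forall n, 0 <= b1 n - a1 n) by (intros n; specialize (Ha1 n); lra).
    assert (Hp2 : forall n, 0 <= b2 n - a2 n) by (intros n; specialize (Ha2 n); lra).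
    intros e' He'. destruct (infsum_ilv _ _ _ _ Hp1 Hp2 Hs1 Hs2 e' He') as [N HN].
    exists N. intros n Hn. erewrite sum_eq; [apply HN; auto|]. intros; apply Heq.
  - lra.
Qed.

Definition bdd (A : R -> Prop) := exists t, 0 <= t /\ forall z, A z -> 0 <= z <= t.

Lemma omeas_bdd : forall A t, 0 <= t -> (forall z, A z -> 0 <= z <= t) -> omeas_le A t.
Proof.
  intros A t Ht HA eps He.
  exists (fun _ => 0), (fun n => match n with O => t | _ => 0 end), t. repeat split.
  - intros [|n]; lra.
  - intros x Hx; exists O; apply HA in Hx; lra.
  - intros e' He'. exists O. intros n _. unfold Rdist.
    replace (sum_f_R0 _ n) with t. rewrite Rminus_diag, Rabs_R0; lra.
    induction n; simpl; [lra|]. rewrite <- IHn; lra.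
  - lra.
Qed.

Lemma hm_exists : forall A, bdd A -> exists m, has_measure A m.
Proof.
  intros A (t & Ht & HA).
  set (E' := fun y => exists r, omeas_le A r /\ y = - r).
  assert (Hb : bound E'). { exists 0. intros y (r & Hr & ->). apply omeas_nonneg in Hr; lra. }
  assert (Hne : exists y, E' y). { exists (-t), t; split; auto; apply omeas_bdd; auto. }
  destruct (completeness E' Hb Hne) as [M [HM1 HM2]].
  exists (-M). split.
  - intros eps He.
    assert (exists y, E' y /\ M - eps/2 < y) as (y & (r & Hr & ->) & Hy).
    { apply NNPP; intros Hn. assert (M <= M - eps/2); [|lra].
      apply HM2. intros y Hy. apply Rnot_lt_le. intros Hlt. apply Hn; eauto. }
    destruct (Hr (eps/2)) as (a & b & l & H1 & H2 & H3 & H4); [lra|].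
    exists a, b, l; repeat split; auto. lra.
  - intros r Hr. assert (- r <= M) by (apply HM1; exists r; auto). lra.
Qed.

Lemma hm_unique : forall A m1 m2, has_measure A m1 -> has_measure A m2 -> m1 = m2.
Proof.
  intros A m1 m2 [H1 H1'] [H2 H2']. apply Rle_antisym; auto.
Qed.

Lemma hm_iff : forall A B m, (forall z, A z <-> B z) -> has_measure A m -> has_measure B m.
Proof.
  intros A B m HAB [H1 H2]. split.
  - eapply omeas_mono; [|apply H1]. intros; apply HAB; auto.
  - intros r Hr. apply H2. eapply omeas_mono; [|apply Hr]. intros; apply HAB; auto.
Qed.

Lemma mu_ex : forall A, exists m, has_measure A m \/ ((~ exists m', has_measure A m') /\ m = 0).
Proof.
  intros A. destruct (classic (exists m', has_measure A m')) as [[m H]|H]; eauto.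
Qed.

Definition mu (A : R -> Prop) : R := proj1_sig (constructive_indefinite_description _ (mu_ex A)).

Lemma mu_spec : forall A, (exists m, has_measure A m) -> has_measure A (mu A).
Proof.
  intros A H. unfold mu. destruct (constructive_indefinite_description _ _) as [m Hm]; simpl.
  destruct Hm as [Hm|[Hn _]]; tauto.
Qed.

Lemma mu_bdd : forall A, bdd A -> has_measure A (mu A).
Proof. intros; apply mu_spec, hm_exists; auto. Qed.

Lemma mu_ext : forall A B, (forall z, A z <-> B z) -> mu A = mu B.
Proof.
  intros A B HAB. destruct (classic (exists m, has_measure A m)) as [[m Hm]|Hn].
  - assert (HB : has_measure B m) by (eapply hm_iff; eauto).
    apply (hm_unique A); [apply mu_spec; eauto|].
    eapply hm_iff; [|apply mu_spec; eauto]. intros; symmetry; apply HAB.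
  - assert (Hn' : ~ exists m, has_measure B m).
    { intros [m Hm]; apply Hn; exists m; eapply hm_iff; [|eauto]; intros; symmetry; apply HAB. }
    unfold mu. destruct (constructive_indefinite_description _ (mu_ex A)) as [x Hx];
    destruct (constructive_indefinite_description _ (mu_ex B)) as [y Hy]; simpl.
    destruct Hx as [Hx|[_ Hx]]; [exfalso; eauto|].
    destruct Hy as [Hy|[_ Hy]]; [exfalso; eauto|]. congruence.
Qed.

Lemma hm_empty : forall A, (forall z, ~ A z) -> has_measure A 0.
Proof.
  intros A HA. split.
  - eapply omeas_mono; [|apply (omeas_bdd A 0)]; [|lra|]; intros z Hz; exfalso; eapply HA; eauto.
  - intros r Hr; eapply omeas_nonneg; eauto.
Qed.

Lemma mu_empty : forall A, (forall z, ~ A z) -> mu A = 0.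
Proof.
  intros A HA. eapply hm_unique; [apply mu_spec; exists 0|]; apply hm_empty; auto.
Qed.

Lemma mu_nonneg : forall A, bdd A -> 0 <= mu A.
Proof. intros A H. destruct (mu_bdd A H) as [H1 _]. eapply omeas_nonneg; eauto. Qed.

Lemma bdd_sub : forall A B, bdd B -> (forall z, A z -> B z) -> bdd A.
Proof. intros A B (t & Ht & H) HAB. exists t; split; auto. Qed.

Lemma mu_split : forall A B, lmeasurable A -> bdd B ->
  mu B = mu (fun z => B z /\ A z) + mu (fun z => B z /\ ~ A z).
Proof.
  intros A B HA HB.
  pose proof (mu_bdd B HB) as [HB1 HB2].
  pose proof (mu_bdd (fun z => B z /\ A z) (bdd_sub _ _ HB (fun z H => proj1 H))) as [H11 H12].
  pose proof (mu_bdd (fun z => B z /\ ~ A z) (bdd_sub _ _ HB (fun z H => proj1 H))) as [H21 H22].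
  apply Rle_antisym.
  - apply HB2. eapply omeas_mono; [|apply (omeas_union _ _ _ _ H11 H21)].
    intros z Hz; destruct (classic (A z)); tauto.
  - destruct (HA B (mu B) HB1) as (r1 & r2 & Hr1 & Hr2 & Hr).
    apply H12 in Hr1. apply H22 in Hr2. lra.
Qed.

Lemma rsum_ext : forall n f g, (forall k, (k < n)%nat -> f k = g k) -> rsum n f = rsum n g.
Proof. induction n; intros f g H; simpl; auto. rewrite (IHn f g), H; auto. Qed.

Lemma rsum_shift : forall n f, rsum (S n) f = f O + rsum n (fun k => f (S k)).
Proof. induction n; intros f; simpl in *; [lra|]. rewrite IHn; simpl; lra. Qed.

Lemma rsum_plus : forall n f g, rsum n (fun k => f k + g k) = rsum n f + rsum n g.
Proof. induction n; intros; simpl; [lra|]. rewrite IHn; lra. Qed.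

Lemma rsum_scal : forall n c f, c * rsum n f = rsum n (fun k => c * f k).
Proof. induction n; intros; simpl; [lra|]. rewrite <- IHn; lra. Qed.

Lemma rsum_swap : forall n m f, rsum n (fun j => rsum m (fun k => f j k)) =
  rsum m (fun k => rsum n (fun j => f j k)).
Proof.
  induction n; intros m f; simpl.
  - induction m; simpl; auto; lra.
  - rewrite IHn, <- rsum_plus; auto.
Qed.

Lemma rsum_nonneg : forall n f, (forall k, (k < n)%nat -> 0 <= f k) -> 0 <= rsum n f.
Proof. induction n; intros f H; simpl; [lra|]. pose proof (H n (Nat.lt_succ_diag_r n)).
  assert (0 <= rsum n f) by (apply IHn; intros; apply H; lia). lra. Qed.

Lemma rsum_term_le : forall n f k, (forall k, (k < n)%nat -> 0 <= f k) -> (k < n)%nat -> f k <= rsum n f.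
Proof.
  induction n; intros f k H Hk; [lia|]. simpl.
  destruct (Nat.eq_dec k n) as [->|Hne].
  - assert (0 <= rsum n f) by (apply rsum_nonneg; intros; apply H; lia). lra.
  - pose proof (H n (Nat.lt_succ_diag_r n)). assert (f k <= rsum n f) by (apply IHn; intros; try apply H; lia). lra.
Qed.

Lemma rsum_single : forall n f j0, (j0 < n)%nat -> (forall k, (k < n)%nat -> k <> j0 -> f k = 0) ->
  rsum n f = f j0.
Proof.
  induction n; intros f j0 Hj H; [lia|]. simpl.
  destruct (Nat.eq_dec j0 n) as [->|Hne].
  - rewrite (rsum_ext n f (fun _ => 0)). { clear. induction n; simpl; lra. }
    intros; apply H; lia.
  - rewrite H by lia. rewrite (IHn f j0) by (try lia; intros; apply H; lia). lra.
Qed.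

Lemma fold_combine : forall vs ms, length ms = length vs ->
  fold_right Rplus 0 (map (fun p => fst p * snd p) (combine vs ms)) =
  rsum (length vs) (fun j => nth j vs 0 * nth j ms 0).
Proof.
  induction vs as [|v vs IH]; intros [|m ms] H; try (simpl in *; lra || discriminate).
  cbn [length combine map fold_right fst snd]. simpl in H.
  rewrite IH by lia. rewrite (rsum_shift (length vs) (fun j => nth j (v :: vs) 0 * nth j (m :: ms) 0)).
  reflexivity.
Qed.

Lemma split_seq : forall n (M : nat -> R -> Prop) B,
  (forall k, lmeasurable (M k)) -> bdd B -> (forall z, B z -> exists k, (k < n)%nat /\ M k z) ->
  mu B = rsum n (fun k => mu (fun z => B z /\ M k z /\ forall j, (j < k)%nat -> ~ M j z)).
Proof.
  induction n; intros M B HM HB Hc.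
  - simpl. apply mu_empty. intros z Hz. destruct (Hc z Hz) as [k [Hk _]]; lia.
  - rewrite (mu_split (M O) B (HM O) HB).
    rewrite (IHn (fun k => M (S k)) (fun z => B z /\ ~ M O z)).
    + rewrite rsum_shift. f_equal.
      * apply mu_ext. intros z; split; [intros [H1 H2]; repeat split; auto; intros; lia|tauto].
      * apply rsum_ext. intros k Hk. apply mu_ext. intros z; split.
        -- intros [[H1 H0] [H2 H3]]. repeat split; auto. intros j Hj Hmj.
           destruct j; [tauto|]. apply (H3 j); auto; lia.
        -- intros [H1 [H2 H3]]. split; [split|split]; auto.
           ++ apply H3; lia.
           ++ intros j Hj. apply H3; lia.
    + intros; apply HM.
    + eapply bdd_sub; [apply HB|]. tauto.
    + intros z [Hz Hn]. destruct (Hc z Hz) as [[|k] [Hk Hmk]]; [tauto|]. exists k; split; auto; lia.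
Qed.

Definition zv : nat -> R := fun _ => 0.

Definition Ms (Q : nat) (Sch : R -> nat -> R) (L : list (nat -> R)) (i : nat) (z : R) : Prop :=
  0 <= z /\ forall q, (q < Q)%nat -> Sch z q = nth i L zv q.

Definition aset (Q : nat) (env : R -> nat) (Sch : R -> nat -> R) (L : list (nat -> R))
  (e : nat) (t : R) (i : nat) (z : R) : Prop :=
  (0 <= z <= t /\ env z = e) /\ Ms Q Sch L i z /\ forall j, (j < i)%nat -> ~ Ms Q Sch L j z.

Lemma vin_nth : forall Q v L, vin Q v L -> exists i, (i < length L)%nat /\
  forall q, (q < Q)%nat -> v q = nth i L zv q.
Proof.
  intros Q v L [w [Hw Hq]]. destruct (In_nth L w zv Hw) as [i [Hi Hn]].
  exists i; split; auto. intros; rewrite Hn; auto.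
Qed.

Lemma fact1 : forall Q (Sset : nat -> list (nat -> R)) env Sch t e,
  (forall t, 0 <= t -> vin Q (Sch t) (Sset (env t))) ->
  (forall v : nat -> R, lmeasurable (fun z => 0 <= z /\ forall q, (q < Q)%nat -> Sch z q = v q)) ->
  0 <= t ->
  mu (fun z => 0 <= z <= t /\ env z = e) =
  rsum (length (Sset e)) (fun i => mu (aset Q env Sch (Sset e) e t i)).
Proof.
  intros Q Sset env Sch t e HSch Hmeas Ht.
  apply split_seq.
  - intros k; apply Hmeas.
  - exists t; split; auto. intros z Hz; tauto.
  - intros z [Hz Hez]. destruct (vin_nth _ _ _ (HSch z (proj1 Hz))) as [i [Hi Hq]].
    subst e. exists i; split; auto. split; [tauto|auto].
Qed.

Lemma fact2 : forall Q E (Sset : nat -> list (nat -> R)) env Sch D t q,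
  (forall t, 0 <= t -> (env t < E)%nat) ->
  (forall k, lmeasurable (fun z => 0 <= z /\ env z = k)) ->
  (forall t, 0 <= t -> vin Q (Sch t) (Sset (env t))) ->
  (forall v : nat -> R, lmeasurable (fun z => 0 <= z /\ forall q, (q < Q)%nat -> Sch z q = v q)) ->
  integral_fin (fun z => Sch z q) 0 t D ->
  0 <= t -> (q < Q)%nat ->
  D = rsum E (fun e => rsum (length (Sset e))
        (fun i => mu (aset Q env Sch (Sset e) e t i) * nth i (Sset e) zv q)).
Proof.
  intros Q E Sset env Sch D t q Henv Henvm HSch Hmeas HD Ht Hq.
  destruct HD as (vs & ms & Hnd & Hlen & Hcov & Hms & HI).
  subst D. rewrite fold_combine by auto.
  set (Bj := fun j z => 0 <= z <= t /\ Sch z q = nth j vs 0).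
  set (Cj := fun j e i z => (Bj j z /\ (0 <= z /\ env z = e) /\
              (forall k, (k < e)%nat -> ~ (0 <= z /\ env z = k))) /\
              Ms Q Sch (Sset e) i z /\ (forall k, (k < i)%nat -> ~ Ms Q Sch (Sset e) k z)).
  assert (Hbdd : forall A : R -> Prop, (forall z, A z -> 0 <= z <= t) -> bdd A).
  { intros A HA; exists t; split; auto. }
  assert (HA : forall j, (j < length vs)%nat -> nth j ms 0 =
     rsum E (fun e => rsum (length (Sset e)) (fun i => mu (Cj j e i)))).
  { intros j Hj. rewrite (hm_unique _ _ _ (Hms j Hj) (mu_bdd (Bj j) (Hbdd _ (fun z H => proj1 H)))).
    rewrite (split_seq E (fun e z => 0 <= z /\ env z = e) (Bj j)).
    - apply rsum_ext. intros e He. apply split_seq.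
      + intros; apply Hmeas.
      + apply Hbdd. intros z Hz; apply Hz.
      + intros z [[Hz _] [[_ Hez] _]]. destruct (vin_nth _ _ _ (HSch z (proj1 Hz))) as [i [Hi Hqi]].
        subst e. exists i; split; auto. split; [tauto|auto].
    - intros; apply Henvm.
    - apply Hbdd. intros z Hz; apply Hz.
    - intros z [Hz _]. exists (env z); split; [apply Henv; tauto|split; [tauto|auto]]. }
  assert (HC : forall j e i, nth j vs 0 * mu (Cj j e i) = nth i (Sset e) zv q * mu (Cj j e i)).
  { intros j e i. destruct (classic (exists z, Cj j e i z)) as [[z Hz]|Hn].
    - destruct Hz as [[[_ H1] _] [[_ H2] _]]. rewrite <- H1, <- H2 by auto. auto.
    - rewrite mu_empty; [lra|]. intros z Hz; apply Hn; eauto. }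
  assert (HD : forall e i, (e < E)%nat ->
      rsum (length vs) (fun j => mu (Cj j e i)) = mu (aset Q env Sch (Sset e) e t i)).
  { intros e i He. destruct (classic (exists z, aset Q env Sch (Sset e) e t i z)) as [[z0 Hz0]|Hn].
    - assert (Hz0' := Hz0). destruct Hz0' as [[Ht0 He0] [[_ Hm0] _]].
      destruct (In_nth vs (Sch z0 q) 0 (Hcov z0 Ht0)) as [j0 [Hj0 Hv0]].
      assert (Hall : forall z, aset Q env Sch (Sset e) e t i z -> Sch z q = nth j0 vs 0).
      { intros z [_ [[_ Hm] _]]. rewrite Hv0, Hm, Hm0 by auto. auto. }
      rewrite (rsum_single _ _ j0 Hj0).
      + apply mu_ext. intros z; split.
        * intros [[[Hz _] Henvz] HMs]. split; [split; [apply Hz|apply Henvz]|apply HMs].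
        * intros Hz. assert (Hz' := Hz). destruct Hz' as [[Htz Hez] HMs].
          split; [|apply HMs]. split; [split; [auto|apply Hall; auto]|].
          split; [split; [tauto|auto]|]. intros k Hk [_ Hek]. lia.
      + intros j Hj Hne. apply mu_empty. intros z [[[_ Hzj] [[_ Hez] _]] [[_ Hmz] _]].
        apply Hne. apply (proj1 (NoDup_nth vs 0) Hnd j j0 Hj Hj0).
        rewrite <- Hzj, Hv0, Hmz, Hm0 by auto. auto.
    - rewrite (mu_empty (aset _ _ _ _ _ _ _)) by (intros z Hz; apply Hn; eauto).
      rewrite (rsum_ext _ _ (fun _ => 0)).
      + clear. induction (length vs); simpl; lra.
      + intros j Hj. apply mu_empty. intros z [[[Hz _] [[_ Hez] _]] HMs]. apply Hn.
        exists z. split; [split; auto|apply HMs]. }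
  rewrite (rsum_ext _ _ (fun j => rsum E (fun e => rsum (length (Sset e))
                  (fun i => nth i (Sset e) zv q * mu (Cj j e i))))).
  - rewrite rsum_swap. apply rsum_ext. intros e He. rewrite rsum_swap. apply rsum_ext.
    intros i Hi. rewrite <- rsum_scal, HD by auto. lra.
  - intros j Hj. rewrite HA by auto. rewrite rsum_scal. apply rsum_ext. intros e He.
    rewrite rsum_scal. apply rsum_ext. intros i Hi. apply HC.
Qed.

Lemma nat_big : forall T, exists N, T <= INR N.
Proof.
  intros T. destruct (archimed T) as [H1 _].
  exists (Z.to_nat (up T)). destruct (Z_lt_le_dec (up T) 0) as [Hl|Hl].
  - pose proof (pos_INR (Z.to_nat (up T))). apply IZR_lt in Hl. lra.
  - rewrite INR_IZR_INZ, Z2Nat.id by auto. lra.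
Qed.

Lemma cv_const : forall c, Un_cv (fun _ => c) c.
Proof. intros c eps He; exists O; intros; unfold Rdist; rewrite Rminus_diag, Rabs_R0; lra. Qed.

Lemma cv_ev_ext : forall u v l, (exists N, forall n, (N <= n)%nat -> u n = v n) -> Un_cv u l -> Un_cv v l.
Proof.
  intros u v l [N HN] Hu eps He. destruct (Hu eps He) as [M HM]. exists (max N M).
  intros n Hn. rewrite <- HN by lia. apply HM; lia.
Qed.

Lemma cv_nonneg : forall u l, (forall n, 0 <= u n) -> Un_cv u l -> 0 <= l.
Proof.
  intros u l Hu Hc. destruct (Rle_lt_dec 0 l) as [|Hl]; auto.
  destruct (Hc (-l)) as [N HN]; [lra|]. specialize (HN N (le_n N)); specialize (Hu N).
  unfold Rdist in HN. rewrite Rabs_pos_eq in HN; lra.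
Qed.

Lemma cv_rsum : forall n (f : nat -> nat -> R) l, (forall k, (k < n)%nat -> Un_cv (f k) (l k)) ->
  Un_cv (fun m => rsum n (fun k => f k m)) (rsum n l).
Proof.
  induction n; intros f l H; simpl.
  - apply cv_const.
  - apply CV_plus; [apply IHn; intros; apply H; lia| apply H; lia].
Qed.

Lemma cv_fun : forall f l w, lim_infty f l -> (forall n, INR n <= w n) -> Un_cv (fun n => f (w n)) l.
Proof.
  intros f l w Hf Hw eps He. destruct (Hf eps He) as [T HT]. destruct (nat_big T) as [N HN].
  exists N. intros n Hn. apply HT. apply le_INR in Hn. specialize (Hw n). lra.
Qed.

Lemma strict_mono : forall g, (forall n, (g n < g (S n))%nat) -> forall a b, (a < b)%nat -> (g a < g b)%nat.
Proof.
  intros g Hg a b Hab. induction Hab; [apply Hg|]. specialize (Hg m). lia.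
Qed.

Lemma strict_ge : forall g, (forall n, (g n < g (S n))%nat) -> forall n, (n <= g n)%nat.
Proof. intros g Hg n; induction n; [lia|]. specialize (Hg n); lia. Qed.

Lemma cv_sub : forall u l g, (forall n, (g n < g (S n))%nat) -> Un_cv u l -> Un_cv (fun n => u (g n)) l.
Proof.
  intros u l g Hg Hu eps He. destruct (Hu eps He) as [N HN]. exists N.
  intros n Hn. apply HN. pose proof (strict_ge g Hg n). lia.
Qed.

Fixpoint sbuild (h : nat -> nat -> nat) (n : nat) : nat :=
  match n with O => h O O | S m => h (S (sbuild h m)) (S m) end.

Lemma bw_sub : forall u, (forall n, 0 <= u n <= 1) ->
  exists g l, (forall n, (g n < g (S n))%nat) /\ Un_cv (fun n => u (g n)) l.
Proof.
  intros u Hu. destruct (Bolzano_Weierstrass u (fun c => 0 <= c <= 1) (compact_P3 0 1) Hu) as [l Hl].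
  assert (Hex : forall N k, exists p, (N <= p)%nat /\ Rabs (u p - l) < / (INR k + 1)).
  { intros N k. assert (Hp : 0 < / (INR k + 1)).
    { apply Rinv_0_lt_compat. pose proof (pos_INR k); lra. }
    assert (Hnb : neighbourhood (disc l (mkposreal _ Hp)) l).
    { exists (mkposreal _ Hp). intros y Hy; exact Hy. }
    destruct (Hl (disc l (mkposreal _ Hp)) N Hnb) as [p [Hp1 Hp2]].
    exists p; split; auto. }
  set (h := fun N k => proj1_sig (constructive_indefinite_description _ (Hex N k))).
  assert (Hh : forall N k, (N <= h N k)%nat /\ Rabs (u (h N k) - l) < / (INR k + 1)).
  { intros N k. unfold h. destruct (constructive_indefinite_description _ _); simpl; auto. }
  exists (sbuild h), l. split.
  - intros n. simpl. destruct (Hh (S (sbuild h n)) (S n)); lia.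
  - intros eps He. destruct (archimed_cor1 eps He) as [N [HN1 HN2]]. exists N.
    intros n Hn. unfold Rdist.
    assert (Hb : Rabs (u (sbuild h n) - l) < / (INR n + 1)).
    { destruct n; simpl; apply Hh. }
    assert (/ (INR n + 1) <= / INR N).
    { apply Rinv_le_contravar. apply lt_0_INR; lia. apply le_INR in Hn. lra. }
    lra.
Qed.

Lemma bw_list : forall (I : Type) (idx : list I) (u : I -> nat -> R),
  (forall x, In x idx -> forall n, 0 <= u x n <= 1) ->
  exists g, (forall n, (g n < g (S n))%nat) /\
    forall x, In x idx -> exists l, Un_cv (fun n => u x (g n)) l.
Proof.
  intros I idx u. induction idx as [|x idx IH]; intros Hb.
  - exists (fun n => n). split; [intros; lia|]. intros x [].
  - destruct IH as [g1 [Hg1 Hl1]]. { intros; apply Hb; simpl; auto. }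
    destruct (bw_sub (fun n => u x (g1 n))) as [g2 [l [Hg2 Hl2]]].
    { intros; apply Hb; simpl; auto. }
    exists (fun n => g1 (g2 n)). split.
    + intros n. apply strict_mono; auto.
    + intros y [<-|Hy].
      * exists l; auto.
      * destruct (Hl1 y Hy) as [l' Hl']. exists l'.
        apply (cv_sub (fun n => u y (g1 n))); auto.
Qed.

Lemma finite_ev : forall E (P : nat -> nat -> Prop),
  (forall e, (e < E)%nat -> exists N, forall n, (N <= n)%nat -> P e n) ->
  exists N, forall n, (N <= n)%nat -> forall e, (e < E)%nat -> P e n.
Proof.
  induction E; intros P H.
  - exists O; intros; lia.
  - destruct (IHE P) as [N1 H1]. { intros; apply H; lia. }
    destruct (H E (Nat.lt_succ_diag_r E)) as [N2 H2].
    exists (max N1 N2). intros n Hn e He.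
    destruct (Nat.eq_dec e E) as [->|]. apply H2; lia. apply H1; lia.
Qed.

Lemma Rdiv_le_0_compat : forall a b, 0 <= a -> 0 < b -> 0 <= a / b.
Proof. intros a b Ha Hb. unfold Rdiv. apply Rmult_le_pos; auto. left; apply Rinv_0_lt_compat; auto. Qed.

Theorem proposition1
  (Q E : nat) (HQ : (1 <= Q)%nat) (HE : (1 <= E)%nat)
  (* service sets S^e, e = 0..E-1: finite, nonempty, complete *)
  (Sset : nat -> list (nat -> R))
  (Hne : forall e, (e < E)%nat -> Sset e <> nil)
  (Hcompl : forall e v q, (e < E)%nat -> In v (Sset e) -> (q < Q)%nat -> 0 < v q ->
      vin Q (fun j => if Nat.eqb j q then 0 else v j) (Sset e))
  (* environment trace, measurable, with time proportions pi *)
  (env : R -> nat) (pi : nat -> R)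
  (Henv : forall t, 0 <= t -> (env t < E)%nat)
  (Henv_meas : forall k, lmeasurable (fun z => 0 <= z /\ env z = k))
  (Hpi : forall k, (k < E)%nat ->
      0 < pi k /\
      exists m : R -> R,
        (forall t, 0 <= t -> has_measure (fun z => 0 <= z <= t /\ env z = k) (m t)) /\
        lim_infty (fun t => m t / t) (pi k))
  (Hpi1 : rsum E pi = 1)
  (* arrival trace with traffic load rho *)
  (N : R -> nat -> R) (rho : nat -> R)
  (HN0 : forall t q, 0 <= t -> (q < Q)%nat -> 0 <= N t q)
  (HNmono : forall s t q, 0 <= s <= t -> (q < Q)%nat -> N s q <= N t q)
  (Hrho : forall q, (q < Q)%nat -> lim_infty (fun t => N t q / t) (rho q))
  (* admissible, measurable schedule S with cumulative service D *)
  (Sch : R -> nat -> R)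
  (HSch : forall t, 0 <= t -> vin Q (Sch t) (Sset (env t)))
  (HSch_meas : forall v : nat -> R,
      lmeasurable (fun z => 0 <= z /\ forall q, (q < Q)%nat -> Sch z q = v q))
  (D : R -> nat -> R)
  (HD : forall t q, 0 <= t -> (q < Q)%nat -> integral_fin (fun z => Sch z q) 0 t (D t q))
  (* initial workload and nonnegativity of X(t) = X(0) + N(t) - int_0^t S *)
  (X0 : nat -> R)
  (HX0 : forall q, (q < Q)%nat -> 0 <= X0 q)
  (HXnn : forall t q, 0 <= t -> (q < Q)%nat -> 0 <= X0 q + N t q - D t q) :
  ~ in_region Q E Sset pi rho ->
  exists q, (q < Q)%nat /\ limsup_pos (fun t => (X0 q + N t q - D t q) / t).
Proof.
  intros Hnot. apply NNPP. intros Hno. apply Hnot. clear Hnot.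
  assert (HX : forall q, (q < Q)%nat -> forall c, 0 < c -> exists T, forall t, T <= t ->
      (X0 q + N t q - D t q) / t <= c).
  { intros q Hq c Hc. apply NNPP; intros H1. apply Hno. exists q; split; auto.
    exists c; split; auto. intros T. apply NNPP; intros H2. apply H1. exists T.
    intros t Ht. apply Rnot_lt_le. intros H3. apply H2. exists t; auto. }
  assert (HDlim : forall q, (q < Q)%nat -> lim_infty (fun t => D t q / t) (rho q)).
  { intros q Hq eps He.
    destruct (HX q Hq (eps/3)) as [T1 HT1]; [lra|].
    destruct (Hrho q Hq (eps/3)) as [T2 HT2]; [lra|].
    exists (Rmax (Rmax T1 T2) (3 * X0 q / eps + 1)). intros t Ht.
    pose proof (Rmax_l (Rmax T1 T2) (3 * X0 q / eps + 1)).
    pose proof (Rmax_r (Rmax T1 T2) (3 * X0 q / eps + 1)).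
    pose proof (Rmax_l T1 T2). pose proof (Rmax_r T1 T2).
    pose proof (HX0 q Hq).
    assert (Hpos3 : 0 <= 3 * X0 q / eps).
    { unfold Rdiv; apply Rmult_le_pos; [lra| left; apply Rinv_0_lt_compat; lra]. }
    assert (Ht0 : 0 < t) by lra.
    assert (Hx0t : X0 q / t < eps / 3).
    { apply (Rmult_lt_reg_r t); auto. unfold Rdiv at 1.
      rewrite Rmult_assoc, Rinv_l, Rmult_1_r by lra.
      assert (Hm : eps/3 * (3 * X0 q / eps + 1) <= eps/3 * t) by (apply Rmult_le_compat_l; lra).
      replace (eps/3 * (3 * X0 q / eps + 1)) with (X0 q + eps/3) in Hm by (field; lra). lra. }
    assert (Hx0p : 0 <= X0 q / t) by (apply Rdiv_le_0_compat; lra).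
    assert (Hxp : 0 <= (X0 q + N t q - D t q) / t) by (apply Rdiv_le_0_compat; [apply HXnn; auto; lra|lra]).
    specialize (HT1 t ltac:(lra)). specialize (HT2 t ltac:(lra)).
    replace (D t q / t) with (X0 q / t + N t q / t - (X0 q + N t q - D t q) / t) by (field; lra).
    destruct (Rabs_def2 _ _ HT2) as [Ha Hb]. apply Rabs_def1; lra. }
  set (mm := fun e t => mu (fun z => 0 <= z <= t /\ env z = e)).
  set (a := fun e i t => mu (aset Q env Sch (Sset e) e t i)).
  assert (Hmlim : forall e, (e < E)%nat -> lim_infty (fun t => mm e t / t) (pi e)).
  { intros e He. destruct (Hpi e He) as [_ [m [Hm Hl]]]. intros eps Heps.
    destruct (Hl eps Heps) as [T HT]. exists (Rmax T 0). intros t Ht.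
    pose proof (Rmax_l T 0). pose proof (Rmax_r T 0).
    assert (Hb : has_measure (fun z => 0 <= z <= t /\ env z = e) (mu (fun z => 0 <= z <= t /\ env z = e))).
    { apply mu_bdd. exists t; split; [lra|]. intros z Hz; apply Hz. }
    unfold mm. rewrite <- (hm_unique _ _ _ (Hm t ltac:(lra)) Hb).
    apply HT; lra. }
  assert (Hf1 : forall e t, 0 <= t -> mm e t = rsum (length (Sset e)) (fun i => a e i t)).
  { intros e t Ht. apply fact1; auto. }
  assert (Hann : forall e i t, 0 <= t -> 0 <= a e i t).
  { intros e i t Ht. apply mu_nonneg. exists t; split; auto. intros z Hz; apply Hz. }
  assert (Hf2 : forall t q, 0 <= t -> (q < Q)%nat -> D t q =
     rsum E (fun e => rsum (length (Sset e)) (fun i => a e i t * nth i (Sset e) zv q))).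
  { intros t q Ht Hq. apply fact2; auto. }
  set (phi := fun e i t => if Rlt_dec 0 (mm e t) then a e i t / mm e t else 0).
  assert (Hphib : forall e i t, 0 <= t -> (i < length (Sset e))%nat -> 0 <= phi e i t <= 1).
  { intros e i t Ht Hi. unfold phi. destruct (Rlt_dec 0 (mm e t)) as [Hp|Hp]; [|lra].
    assert (Hle : a e i t <= mm e t).
    { rewrite Hf1 by auto. apply (rsum_term_le _ (fun i => a e i t)); auto. }
    pose proof (Hann e i t Ht). split.
    - apply Rdiv_le_0_compat; lra.
    - unfold Rdiv. rewrite <- (Rinv_r (mm e t)) by lra. apply Rmult_le_compat_r; auto.
      left; apply Rinv_0_lt_compat; lra. }
  assert (Hphis : forall e t, 0 <= t -> 0 < mm e t -> rsum (length (Sset e)) (fun i => phi e i t) = 1).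
  { intros e t Ht Hp. rewrite (rsum_ext _ _ (fun i => / mm e t * a e i t)).
    - rewrite <- rsum_scal, <- Hf1 by auto. field; lra.
    - intros i Hi. unfold phi. destruct (Rlt_dec 0 (mm e t)); [|lra]. unfold Rdiv; lra. }
  assert (Hphia : forall e i t, 0 < mm e t -> a e i t = phi e i t * mm e t).
  { intros e i t Hp. unfold phi. destruct (Rlt_dec 0 (mm e t)); [|lra]. field; lra. }
  assert (Hrep : forall t q, 0 < t -> (q < Q)%nat -> (forall e, (e < E)%nat -> 0 < mm e t) ->
     D t q / t = rsum E (fun e => (mm e t / t) *
        rsum (length (Sset e)) (fun i => phi e i t * nth i (Sset e) zv q))).
  { intros t q Ht Hq Hp. rewrite Hf2 by (auto; lra). unfold Rdiv at 1.
    rewrite Rmult_comm, rsum_scal. apply rsum_ext. intros e He.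
    rewrite rsum_scal, rsum_scal. apply rsum_ext. intros i Hi.
    rewrite (Hphia e i t) by auto. field. lra. }
  set (w := fun n : nat => INR n + 1).
  assert (Hw : forall n, INR n <= w n) by (intros n; unfold w; lra).
  assert (Hw0 : forall n, 0 < w n) by (intros n; unfold w; pose proof (pos_INR n); lra).
  assert (Hev : exists N0, forall n, (N0 <= n)%nat -> forall e, (e < E)%nat -> 0 < mm e (w n)).
  { apply finite_ev. intros e He.
    pose proof (cv_fun _ _ w (Hmlim e He) Hw) as Hc.
    destruct (Hpi e He) as [Hpe _].
    destruct (Hc (pi e / 2)) as [N1 HN1]; [lra|]. exists N1. intros n Hn.
    specialize (HN1 n Hn). unfold Rdist in HN1. destruct (Rabs_def2 _ _ HN1) as [_ Hb].
    assert (Hq : 0 < mm e (w n) / w n) by lra.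
    specialize (Hw0 n).
    replace (mm e (w n)) with (mm e (w n) / w n * w n) by (field; lra).
    apply Rmult_lt_0_compat; lra. }
  destruct Hev as [N0 HNev].
  set (idx := flat_map (fun e => map (fun i => (e, i)) (seq 0 (length (Sset e)))) (seq 0 E)).
  assert (Hidx : forall e i, In (e, i) idx <-> (e < E)%nat /\ (i < length (Sset e))%nat).
  { intros e i. unfold idx. rewrite in_flat_map. split.
    - intros [e' [He' Hm]]. rewrite in_map_iff in Hm. destruct Hm as [i' [Heq Hi']].
      inversion Heq; subst. rewrite in_seq in *. lia.
    - intros [He Hi]. exists e. split; [rewrite in_seq; lia|].
      rewrite in_map_iff. exists i. split; auto. rewrite in_seq; lia. }
  destruct (bw_list _ idx (fun x n => phi (fst x) (snd x) (w n))) as [g [Hg Hlim]].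
  { intros [e i] Hx n. apply Hidx in Hx. simpl. apply Hphib; [left; apply Hw0|tauto]. }
  assert (Hch : forall x, exists l, In x idx -> Un_cv (fun n => phi (fst x) (snd x) (w (g n))) l).
  { intros x. destruct (classic (In x idx)) as [Hx|Hx].
    - destruct (Hlim x Hx) as [l Hl]. exists l; auto.
    - exists 0; tauto. }
  set (ps := fun x => proj1_sig (constructive_indefinite_description _ (Hch x))).
  assert (Hps : forall e i, (e < E)%nat -> (i < length (Sset e))%nat ->
     Un_cv (fun n => phi e i (w (g n))) (ps (e, i))).
  { intros e i He Hi. unfold ps. destruct (constructive_indefinite_description _ _) as [l Hl].
    simpl. apply (Hl (proj2 (Hidx e i) (conj He Hi))). }
  assert (Hwg : forall n, INR n <= w (g n)).
  { intros n. unfold w. pose proof (le_INR _ _ (strict_ge g Hg n)). lra. }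
  assert (HevG : forall n, (N0 <= n)%nat -> forall e, (e < E)%nat -> 0 < mm e (w (g n))).
  { intros n Hn e He. apply HNev; auto. pose proof (strict_ge g Hg n). lia. }
  split; [|exists (fun e i => ps (e, i)); split; [|split]].
  - intros q Hq. apply (cv_nonneg (fun n => N (w n) q / w n)).
    + intros n. apply Rdiv_le_0_compat; [apply HN0; [left; apply Hw0|auto]|apply Hw0].
    + apply (cv_fun (fun t => N t q / t) (rho q) w); auto.
  - intros e i He Hi. apply (cv_nonneg (fun n => phi e i (w (g n)))); [|apply Hps; auto].
    intros n; apply Hphib; auto. left; apply Hw0.
  - intros e He.
    apply (UL_sequence (fun n => rsum (length (Sset e)) (fun i => phi e i (w (g n))))).
    + apply (cv_rsum _ (fun i n => phi e i (w (g n))) (fun i => ps (e, i))).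
      intros; apply Hps; auto.
    + apply (cv_ev_ext (fun _ => 1)); [|apply cv_const].
      exists N0. intros n Hn. rewrite Hphis; auto. left; apply Hw0.
  - intros q Hq. right.
    apply (UL_sequence (fun n => D (w (g n)) q / w (g n))).
    + apply (cv_fun (fun t => D t q / t)); auto.
    + apply (cv_ev_ext (fun n => rsum E (fun e => (mm e (w (g n)) / w (g n)) *
          rsum (length (Sset e)) (fun i => phi e i (w (g n)) * nth i (Sset e) zv q)))).
      * exists N0. intros n Hn. symmetry. apply Hrep; auto; intros; apply HevG; auto.
      * apply (cv_rsum _ (fun e n => (mm e (w (g n)) / w (g n)) *
          rsum (length (Sset e)) (fun i => phi e i (w (g n)) * nth i (Sset e) zv q))
          (fun e => pi e * rsum (length (Sset e)) (fun i => ps (e, i) * nth i (Sset e) (fun _ => 0) q))).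
        intros e He. apply CV_mult.
        -- apply (cv_fun (fun t => mm e t / t) (pi e) (fun n => w (g n))); auto.
        -- apply (cv_rsum _ (fun i n => phi e i (w (g n)) * nth i (Sset e) zv q)).
           intros i Hi. apply CV_mult; [apply Hps; auto|apply cv_const].
Qed.
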